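(* Let $D$ be a crossing optimal normalized 2-page book drawing of $K_n$ and $0\le k\le\lfloor n/2\rfloor-2$. Then every $\le k$-edge $ij$ ($i<j$) of $D$ satisfies $i\le k+1$ or $j\ge n-k$; that is, all entries of $M(D)$ representing $\le k$-edges lie in the union of the first $k+1$ rows and the last $k+1$ columns of $M(D)$.
   Context: Normalized 2-page book drawing of $K_n$: vertices $(1,0),\dots,(n,0)$ labelled $1,\dots,n$; edges $i(i+1)$ on the spine; edge $1n$ in the upper half-plane; every other edge $ij$ a semicircle over $[i,j]$ in the upper or lower half-plane. $M(D)$ has entries $(i,j)$, $1\le i<j\le n$ (row $i$, column $j$), representing edge $ij$; its columns are indexed $2,\dots,n$. For distinct vertices $p,q,r$, $r$ is on the left (right) of $\overrightarrow{pq}$ if the triangle with edges $pq,qr,rp$ traced in order $p,q,r$ is counterclockwise (clockwise); an edge is a $k$-edge if exactly $k$ of the other $n-2$ vertices lie on one side of it; each edge has a unique such index in $\{0,\dots,\lfloor n/2\rfloor-1\}$, and a $\le k$-edge is one with index at most $k$. Crossing optimal: exactly $Z(n)=\frac14\lfloor\frac n2\rfloor\lfloor\frac{n-1}2\rfloor\lfloor\frac{n-2}2\rfloor\lfloor\frac{n-3}2\rfloor$ crossings. *)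

(* Defs.v *)
From mathcomp Require Import all_boot.
Set Implicit Arguments. Unset Strict Implicit. Unset Printing Implicit Defensive.

(* A normalized 2-page book drawing of K_n, vertices 1..n at (1,0),...,(n,0).
   Spine edges i(i+1) lie on the spine; every other edge ij (i<j, j >= i+2)
   is a semicircle over [i,j] in the upper (page i j = true) or lower
   (page i j = false) half-plane.  Values of [page] outside
   { (i,j) | 1 <= i, i+2 <= j <= n } are irrelevant. *)
Definition drawing := nat -> nat -> bool.

Definition normalized (n : nat) (D : drawing) : Prop := D 1 n = true.

(* Two semicircles cross (exactly once) iff they lie on the same page and their
   endpoints interleave, i < k < j < l; no other pair of edges crosses. *)
Definition crossings (n : nat) (D : drawing) : nat :=
  \sum_(1 <= i < n.+1) \sum_(1 <= k < n.+1) \sum_(1 <= j < n.+1)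
  \sum_(1 <= l < n.+1) [&& i < k, k < j, j < l & D i j == D k l].

Definition Z (n : nat) : nat :=
  (n./2 * (n - 1)./2 * (n - 2)./2 * (n - 3)./2) %/ 4.

Definition crossing_optimal (n : nat) (D : drawing) : Prop :=
  crossings n D = Z n.

(* Orientation of the triangle with edges pq, qr, rp traced p,q,r
   (for distinct p,q,r): true = counterclockwise.  For a < b < c the
   triangle a->b->c->a is counterclockwise iff the edge ac is in the upper
   half-plane (the arcs ab, bc lie inside the region bounded by the
   semicircle ac and the spine); cyclic rotations keep the orientation,
   transpositions reverse it. *)
Definition ccw (D : drawing) (p q r : nat) : bool :=
  if (p < q) && (q < r) then D p r
  else if (q < r) && (r < p) then D q p
  else if (r < p) && (p < q) then D r q
  else if (p < r) && (r < q) then ~~ D p q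
  else if (q < p) && (p < r) then ~~ D q r
  else ~~ D r p.

(* r is on the left of the directed edge pq iff ccw p q r; on the right iff
   the triangle is clockwise. *)
Definition left_count (n : nat) (D : drawing) (p q : nat) : nat :=
  \sum_(1 <= r < n.+1) [&& r != p, r != q & ccw D p q r].

Definition right_count (n : nat) (D : drawing) (p q : nat) : nat :=
  \sum_(1 <= r < n.+1) [&& r != p, r != q & ~~ ccw D p q r].

(* The index k of an edge: exactly k of the other n-2 vertices lie on one side;
   the unique such value in {0, ..., floor(n/2)-1} is the minimum. *)
Definition edge_index (n : nat) (D : drawing) (i j : nat) : nat :=
  minn (left_count n D i j) (right_count n D i j).

(* Main.v *)
Require Import Defs.
From mathcomp Require Import all_boot zify.
Set Implicit Arguments. Unset Strict Implicit. Unset Printing Implicit Defensive.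

Lemma sum_eq1 lo hi a : \sum_(lo <= r < hi) (r == a) = (lo <= a < hi).
Proof.
elim: hi => [|hi IH]; first by rewrite big_geq // ltn0 andbF.
case: (leqP lo hi) => H.
  rewrite big_nat_recr //= IH.
  case: (ltngtP a hi) => h.
  - by rewrite addn0 ltnS (ltnW h).
  - by rewrite addn0 ltnS (leqNgt a hi) h andbF.
  - by rewrite h ltnSn H andbF.
rewrite big_geq //; case: andP => // -[h1 h2]; lia.
Qed.

Lemma sum_const1 lo hi : \sum_(lo <= r < hi) 1 = hi - lo.
Proof. by rewrite sum_nat_const_nat muln1. Qed.

Lemma sum_ind_le lo hi (P : nat -> bool) : \sum_(lo <= r < hi) P r <= hi - lo.
Proof.
rewrite -sum_const1; apply: leq_sum => i _; by case: (P i).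
Qed.

Definition lc (D : drawing) lo hi a b :=
  \sum_(lo <= r < hi.+1) [&& r != a, r != b & ccw D a b r].
Definition rc (D : drawing) lo hi a b :=
  \sum_(lo <= r < hi.+1) [&& r != a, r != b & ~~ ccw D a b r].

Lemma lc_rc D lo hi a b : a != b -> lo <= a <= hi -> lo <= b <= hi ->
  lc D lo hi a b + rc D lo hi a b = hi.+1 - lo - 2.
Proof.
move=> nab ha hb.
have E : lc D lo hi a b + rc D lo hi a b + (\sum_(lo <= r < hi.+1) (r == a))
   + (\sum_(lo <= r < hi.+1) (r == b)) = hi.+1 - lo.
  rewrite -sum_const1 /lc /rc -!big_split /=; apply: eq_bigr => r _.
  case: (ccw D a b r); case: (eqVneq r a) => [->|ra]; rewrite ?eqxx ?(negbTE nab) //=;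
  by case: (eqVneq r b).
rewrite !sum_eq1 in E. move: ha hb E => /andP[h1 h2] /andP[h3 h4].
rewrite h1 h3 (leq_ltn_trans h2 (ltnSn _)) (leq_ltn_trans h4 (ltnSn _)) /=. lia.
Qed.

Ltac ccw_solve := rewrite /ccw; repeat (case: ifP => /= [/andP[? ?]|?]); try lia; done.

Lemma ccw123 D p q r : p < q -> q < r -> ccw D p q r = D p r. Proof. move=> *; ccw_solve. Qed.
Lemma ccw231 D p q r : q < r -> r < p -> ccw D p q r = D q p. Proof. move=> *; ccw_solve. Qed.
Lemma ccw312 D p q r : r < p -> p < q -> ccw D p q r = D r q. Proof. move=> *; ccw_solve. Qed.
Lemma ccw132 D p q r : p < r -> r < q -> ccw D p q r = ~~ D p q. Proof. move=> *; ccw_solve. Qed.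
Lemma ccw213 D p q r : q < p -> p < r -> ccw D p q r = ~~ D q r. Proof. move=> *; ccw_solve. Qed.
Lemma ccw321 D p q r : r < q -> q < p -> ccw D p q r = ~~ D r p. Proof. move=> *; ccw_solve. Qed.

Lemma lc_row D lo hi b : lo < b <= hi ->
  lc D lo hi lo b = (b - lo.+1) * ~~ D lo b + \sum_(b.+1 <= r < hi.+1) D lo r.
Proof.
move=> /andP[h1 h2]; rewrite /lc.
rewrite big_ltn; last lia.
rewrite eqxx /= add0n.
rewrite (big_cat_nat (n:=b)) /=; [|lia|lia].
rewrite (big_ltn (m:=b)); last lia.
rewrite eqxx andbF add0n.
congr (_ + _).
- rewrite (eq_big_nat _ _ (F2 := fun _ => nat_of_bool (~~ D lo b))).
    by rewrite sum_nat_const_nat mulnC.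
  move=> r /andP[r1 r2]. by rewrite (gtn_eqF r1) (ltn_eqF r2) ccw132.
- apply: eq_big_nat => r /andP[r1 r2].
  have r0 : lo < r by lia.
  by rewrite (gtn_eqF r0) (gtn_eqF r1) ccw123.
Qed.

Lemma lc_row_inj D lo hi b b' : lo < b -> b < b' -> b' <= hi ->
  lc D lo hi lo b <> lc D lo hi lo b'.
Proof.
move=> h1 h2 h3.
rewrite !lc_row; [|lia|lia].
rewrite (big_cat_nat (n:=b')) /=; [|lia|lia].
rewrite (big_ltn (m:=b')); last lia.
have := sum_ind_le (b.+1) b' (fun r => D lo r).
case: (D lo b); case: (D lo b') => /=; lia.
Qed.

Lemma lc_col D lo hi a : lo <= a < hi ->
  lc D lo hi a hi = \sum_(lo <= r < a) D r hi + (hi - a.+1) * ~~ D a hi.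
Proof.
move=> /andP[h1 h2]; rewrite /lc.
rewrite (big_cat_nat (n:=a)) /=; [|lia|lia].
rewrite (big_ltn (m:=a)); last lia.
rewrite eqxx /= add0n.
rewrite big_nat_recr /=; last lia.
rewrite eqxx andbF addn0.
congr (_ + _).
- apply: eq_big_nat => r /andP[r1 r2].
  have r0 : r < hi by lia.
  by rewrite (ltn_eqF r2) (ltn_eqF r0) ccw312.
- rewrite (eq_big_nat _ _ (F2 := fun _ => nat_of_bool (~~ D a hi))).
    by rewrite sum_nat_const_nat mulnC.
  move=> r /andP[r1 r2]. by rewrite (gtn_eqF r1) (ltn_eqF r2) ccw132.
Qed.

Lemma lc_col_inj D lo hi a a' : lo <= a -> a < a' -> a' < hi ->
  lc D lo hi a hi <> lc D lo hi a' hi.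
Proof.
move=> h1 h2 h3.
rewrite !lc_col; [|lia|lia].
rewrite (big_cat_nat (n:=a) (p:=a')) /=; [|lia|lia].
rewrite (big_ltn (m:=a) (n:=a')); last lia.
have := sum_ind_le (a.+1) a' (fun r => D r hi).
case: (D a hi); case: (D a' hi) => /=; lia.
Qed.

Lemma perm_sum (F : nat -> nat) s K (f : nat -> nat) :
  (forall x y, s <= x < s + K -> s <= y < s + K -> F x = F y -> x = y) ->
  (forall x, s <= x < s + K -> F x < K) ->
  \sum_(s <= x < s + K) f (F x) = \sum_(0 <= v < K) f v.
Proof.
move=> Finj Frng.
rewrite /index_iota addKn subn0 -(big_map F xpredT f).
apply: perm_big.
have U1 : uniq (map F (iota s K)).
  rewrite map_inj_in_uniq ?iota_uniq // => x y; rewrite !mem_iota; exact: Finj.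
have S1 : {subset map F (iota s K) <= iota 0 K}.
  move=> v /mapP[x]; rewrite mem_iota => hx ->; rewrite mem_iota add0n /=; exact: Frng.
have [_ E] := uniq_min_size U1 S1 (ltac:(by rewrite size_map !size_iota)).
by apply: uniq_perm => //; apply: iota_uniq.
Qed.

Lemma lc_split_lo D lo hi a b : lo < a -> lo < b -> lo <= hi ->
  lc D lo hi a b = ccw D a b lo + lc D lo.+1 hi a b.
Proof. move=> h1 h2 h3; rewrite /lc big_ltn; last lia. by rewrite (ltn_eqF h1) (ltn_eqF h2). Qed.

Lemma rc_split_lo D lo hi a b : lo < a -> lo < b -> lo <= hi ->
  rc D lo hi a b = ~~ ccw D a b lo + rc D lo.+1 hi a b.
Proof. move=> h1 h2 h3; rewrite /rc big_ltn; last lia. by rewrite (ltn_eqF h1) (ltn_eqF h2). Qed.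

Lemma lc_drop_hi D lo hi hi' a b : lo <= hi'.+1 -> hi' <= hi ->
  lc D lo hi a b <= lc D lo hi' a b + (hi - hi').
Proof.
move=> h1 h2; rewrite /lc (big_cat_nat (n:=hi'.+1)) /=; [|lia|lia].
rewrite leq_add2l; apply: leq_trans (sum_ind_le _ _ _) _; lia.
Qed.

Lemma rc_drop_hi D lo hi hi' a b : lo <= hi'.+1 -> hi' <= hi ->
  rc D lo hi a b <= rc D lo hi' a b + (hi - hi').
Proof.
move=> h1 h2; rewrite /rc (big_cat_nat (n:=hi'.+1)) /=; [|lia|lia].
rewrite leq_add2l; apply: leq_trans (sum_ind_le _ _ _) _; lia.
Qed.

Lemma col_perm D lo b (c : bool) f : lo < b ->
  \sum_(lo <= a < b) f (if c then rc D lo b a b else lc D lo b a b)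
  = \sum_(0 <= v < b - lo) f v.
Proof.
move=> hb.
have -> : b = lo + (b - lo) by lia.
rewrite addKn; set K := b - lo.
have Hs : forall a, lo <= a < lo + K -> lc D lo (lo + K) a (lo + K) + rc D lo (lo + K) a (lo + K) = K.+1 - 2.
  move=> a ha; rewrite lc_rc; [lia| |lia|lia]. apply/eqP; lia.
apply: perm_sum.
- move=> x y hx hy.
  have Hinj : forall x y, lo <= x -> x < y -> y < lo + K ->
      lc D lo (lo + K) x (lo + K) <> lc D lo (lo + K) y (lo + K).
    by move=> x' y' *; apply: lc_col_inj.
  have := Hs x hx; have := Hs y hy.
  case: (ltngtP x y) => // hxy; case: c => E1 E2 E3.
  + exfalso; apply: (Hinj x y) => //; lia.
  + exfalso; apply: (Hinj x y) => //; lia.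
  + exfalso; apply: (Hinj y x) => //; lia.
  + exfalso; apply: (Hinj y x) => //; lia.
- move=> x hx; have := Hs x hx; case: c; lia.
Qed.

Lemma row_perm D lo n f : lo < n ->
  \sum_(lo.+1 <= b < n.+1) f (lc D lo n lo b) = \sum_(0 <= v < n - lo) f v.
Proof.
move=> hn.
have -> : n.+1 = lo.+1 + (n - lo) by lia.
have Hs : forall b, lo.+1 <= b < lo.+1 + (n - lo) -> lc D lo n lo b + rc D lo n lo b = n.+1 - lo - 2.
  move=> b hb; rewrite lc_rc; [lia| |lia|lia]. apply/eqP; lia.
apply: perm_sum.
- move=> x y hx hy.
  case: (ltngtP x y) => // hxy E; exfalso.
  + apply: (@lc_row_inj D lo n x y) => //; lia.
  + apply: (@lc_row_inj D lo n y x) => //; lia.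
- move=> x hx; have := Hs x hx; lia.
Qed.

Lemma sumT1 c : \sum_(0 <= v < c) (c - v) = 'C(c.+1, 2).
Proof.
elim: c => [|c IH]; first by rewrite big_geq.
rewrite big_nat_recr //= binS bin1 -IH.
rewrite (eq_big_nat _ _ (F2 := fun v => (c - v) + 1)); last by move=> v /andP[_ hv]; lia.
rewrite big_split /= sum_nat_const_nat muln1 subn0. lia.
Qed.

Lemma sumT1' c K : c <= K -> \sum_(0 <= v < K) (c - v) = 'C(c.+1, 2).
Proof.
move=> h; rewrite (big_cat_nat (n:=c)) //= sumT1.
rewrite (eq_big_nat _ _ (F2 := fun _ => 0)) ?big1 ?addn0 // => v /andP[hv _]; lia.
Qed.

Lemma sumT2 c K : c <= K -> \sum_(0 <= v < K) (c - (K.-1 - v)) = 'C(c.+1, 2).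
Proof.
move=> h; rewrite big_nat_rev /= -(sumT1' h); apply: eq_big_nat => v /andP[_ hv]; lia.
Qed.

Lemma sumT3 x K : x < K -> \sum_(0 <= v < K) (v <= x) = x.+1.
Proof.
move=> h; rewrite (big_cat_nat (n:=x.+1)) //=.
rewrite (eq_big_nat _ _ (F2 := fun _ => 1)); last by move=> v /andP[_ hv]; rewrite -ltnS hv.
rewrite sum_nat_const_nat muln1 subn0.
rewrite (eq_big_nat _ _ (F2 := fun _ => 0)) ?big1 ?addn0 // => v /andP[hv _].
by rewrite leqNgt hv.
Qed.

Lemma sumT4 j : \sum_(0 <= t < j.+1) t.+1 = 'C(j.+2, 2).
Proof.
elim: j => [|j IH]; first by rewrite big_nat1.
by rewrite big_nat_recr //= IH [in RHS]binS bin1 addnC.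
Qed.

Lemma leq_sum_nat m n (F G : nat -> nat) : (forall i, m <= i < n -> F i <= G i) ->
  \sum_(m <= i < n) F i <= \sum_(m <= i < n) G i.
Proof. move=> H; rewrite big_nat_cond [X in _ <= X]big_nat_cond; apply: leq_sum => i /andP[hi _]; exact: H. Qed.

Definition Wt j L R := (j - L) + (j - R).
Definition inR lo n j a b := (a < lo + j) || (n - j < b).
Definition FR D lo n j := \sum_(lo <= a < n.+1) \sum_(lo <= b < n.+1)
   ((a < b) && inR lo n j a b) * Wt j (lc D lo n a b) (rc D lo n a b).
Definition ex D lo n j a b :=
  if ccw D a b lo then (rc D lo.+1 n a b <= j) else (lc D lo.+1 n a b <= j).

Lemma row_part D lo n j : 2 * j + 3 <= n - lo ->
  \sum_(lo <= b < n.+1) ((lo < b) && inR lo n j.+1 lo b) * Wt j.+1 (lc D lo n lo b) (rc D lo n lo b)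
  = 2 * 'C(j.+2, 2).
Proof.
move=> h.
rewrite big_ltn; last lia. rewrite ltnn /= add0n.
rewrite (eq_big_nat _ _ (F2 := fun b => (fun v => Wt j.+1 v ((n - lo).-1 - v)) (lc D lo n lo b))).
  rewrite (@row_perm D lo n (fun v => Wt j.+1 v ((n - lo).-1 - v))); last lia.
  rewrite /Wt big_split /= sumT1' ?sumT2; lia.
move=> b /andP[h1 h2].
have E := @lc_rc D lo n lo b.
rewrite /inR h1 /= (_ : lo < lo + j.+1) ?mul1n; last lia.
rewrite (_ : rc D lo n lo b = (n - lo).-1 - lc D lo n lo b) //.
have := E (negbT (ltn_eqF h1)) (ltac:(lia)) (ltac:(lia)). lia.
Qed.

Lemma lc_corner D lo b : lo < b -> lc D lo b lo b = (b - lo.+1) * ~~ D lo b.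
Proof. move=> h; rewrite lc_row; last by rewrite h leqnn. by rewrite big_geq // addn0. Qed.

Lemma col_part D lo n j b : 2 * j + 3 <= n - lo -> n - j <= b <= n ->
  b + j.+1 - n <= \sum_(lo.+1 <= a < n.+1) (a < b) * ex D lo n j a b.
Proof.
move=> h /andP[hb1 hb2].
set x := j - (n - b).
have hlb : lo < b by lia.
apply: (@leq_trans (\sum_(lo.+1 <= a < b) ((if D lo b then rc D lo b a b else lc D lo b a b) <= x))).
  have := @col_perm D lo b (D lo b) (fun v => nat_of_bool (v <= x)) hlb.
  rewrite sumT3; last lia.
  rewrite big_ltn //.
  have Hc : lc D lo b lo b + rc D lo b lo b = b.+1 - lo - 2.
    rewrite lc_rc //; [apply/eqP; lia|lia|lia].
  have H0 : (if D lo b then rc D lo b lo b else lc D lo b lo b) <= x = false.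
    move: Hc; rewrite lc_corner //; case: (D lo b) => /= Hc; apply/negbTE; rewrite -ltnNge; lia.
  rewrite H0 add0n => ->. lia.
rewrite (big_cat_nat (n:=b) (m:=lo.+1) (p:=n.+1)) /=; [|lia|lia].
apply: leq_trans (leq_addr _ _).
apply: leq_sum_nat => a /andP[ha1 ha2].
rewrite ha2 mul1n /ex ccw312 //.
have Hl := @lc_split_lo D lo b a b ha1 hlb (ltnW hlb).
have Hr := @rc_split_lo D lo b a b ha1 hlb (ltnW hlb).
have Dl := @lc_drop_hi D lo.+1 n b a b (ltac:(lia)) hb2.
have Dr := @rc_drop_hi D lo.+1 n b a b (ltac:(lia)) hb2.
rewrite ccw312 // in Hl Hr.
case: (D lo b) Hl Hr => /= Hl Hr.
- case E: (rc D lo b a b <= x) => //=. rewrite (_ : rc D lo.+1 n a b <= j) //. lia.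
- case E: (lc D lo b a b <= x) => //=. rewrite (_ : lc D lo.+1 n a b <= j) //. lia.
Qed.

Lemma FR_step D lo n j : 2 * j + 3 <= n - lo ->
  2 * 'C(j.+2, 2) + FR D lo.+1 n j +
  \sum_(lo.+1 <= a < n.+1) \sum_(lo.+1 <= b < n.+1) ((a < b) && (n - j <= b)) * ex D lo n j a b
  <= FR D lo n j.+1.
Proof.
move=> h.
rewrite [FR D lo n j.+1]/FR [X in _ <= X]big_ltn; last lia.
rewrite row_part // -addnA leq_add2l.
rewrite /FR -big_split /=; apply: leq_sum_nat => a /andP[ha1 ha2].
rewrite [X in _ <= X]big_ltn; last lia.
rewrite (_ : a < lo = false); last lia. rewrite /= add0n.
rewrite -big_split /=; apply: leq_sum_nat => b /andP[hb1 hb2].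
case hab: (a < b); rewrite /= ?muln0 //.
have hla : lo < a by lia. have hlb : lo < b by lia. have hln : lo <= n by lia.
rewrite (lc_split_lo D hla hlb hln) (rc_split_lo D hla hlb hln).
have Hw : Wt j (lc D lo.+1 n a b) (rc D lo.+1 n a b) + ex D lo n j a b <=
   Wt j.+1 (ccw D a b lo + lc D lo.+1 n a b) (~~ ccw D a b lo + rc D lo.+1 n a b).
  rewrite /ex /Wt; case: (ccw D a b lo) => /=.
  - case: (leqP (rc D lo.+1 n a b) j) => /= ?; lia.
  - case: (leqP (lc D lo.+1 n a b) j) => /= ?; lia.
rewrite /inR.
rewrite (_ : lo.+1 + j = lo + j.+1); last lia.
rewrite (_ : (n - j.+1 < b) = (n - j <= b)); last by apply/idP/idP; lia.
case H1: (a < lo + j.+1); rewrite /=.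
- rewrite !mul1n; apply: leq_trans _ Hw; rewrite leq_add2l; case: (n - j <= b); by rewrite ?mul1n ?mul0n.
case H3: (n - j <= b); rewrite /= ?mul1n.
- apply: leq_trans _ Hw; rewrite leq_add2r; case: (n - j < b); by rewrite ?mul1n ?mul0n.
- rewrite (_ : n - j < b = false) //; apply/negbTE; lia.
Qed.

Lemma EX_lower D lo n j : 2 * j + 3 <= n - lo ->
  'C(j.+2, 2) <=
  \sum_(lo.+1 <= a < n.+1) \sum_(lo.+1 <= b < n.+1) ((a < b) && (n - j <= b)) * ex D lo n j a b.
Proof.
move=> h.
rewrite exchange_big /=.
rewrite (big_cat_nat (n:=n - j) (m:=lo.+1) (p:=n.+1)) /=; [|lia|lia].
apply: leq_trans (leq_addl _ _).
apply: (@leq_trans (\sum_(n - j <= b < n.+1) (b + j.+1 - n))).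
  rewrite -{1}(add0n (n - j)) big_addn.
  rewrite (_ : n.+1 - (n - j) = j.+1); last lia.
  rewrite -sumT4; apply: leq_sum_nat => t ht; lia.
apply: leq_sum_nat => b /andP[hb1 hb2].
have hb : n - j <= b <= n by rewrite hb1 /=; lia.
apply: (leq_trans (col_part D h hb)).
apply: leq_sum_nat => a _; rewrite hb1 andbT; done.
Qed.

Lemma FR_lower D n j : forall lo, 2 * j + 1 <= n - lo -> 3 * 'C(j.+2, 3) <= FR D lo n j.
Proof.
elim: j => [|j IH] lo h; first by rewrite bin_small.
have h' : 2 * j + 3 <= n - lo by lia.
apply: (leq_trans _ (FR_step D h')).
have := IH lo.+1 (ltac:(lia)).
have := EX_lower D h'.
rewrite [in X in _ -> _ -> X]binS [in X in _ -> _ -> X]mulnDr.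
lia.
Qed.

Definition cube4 n (F : nat -> nat -> nat -> nat -> nat) :=
  \sum_(1 <= a < n.+1) \sum_(1 <= b < n.+1) \sum_(1 <= c < n.+1) \sum_(1 <= d < n.+1) F a b c d.

Lemma cube4_ext n F G : (forall a b c d, F a b c d = G a b c d) -> cube4 n F = cube4 n G.
Proof.
move=> H; rewrite /cube4; apply: eq_bigr => a _; apply: eq_bigr => b _;
apply: eq_bigr => c _; apply: eq_bigr => d _; exact: H.
Qed.

Lemma cube4_add n F G : cube4 n (fun a b c d => F a b c d + G a b c d) = cube4 n F + cube4 n G.
Proof.
rewrite /cube4 -big_split; apply: eq_bigr => a _; rewrite -big_split; apply: eq_bigr => b _;
rewrite -big_split; apply: eq_bigr => c _; rewrite -big_split //.
Qed.

Lemma sw12 n F : cube4 n F = cube4 n (fun a b c d => F b a c d).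
Proof. by rewrite /cube4 exchange_big. Qed.
Lemma sw23 n F : cube4 n F = cube4 n (fun a b c d => F a c b d).
Proof. rewrite /cube4; apply: eq_bigr => a _; by rewrite exchange_big. Qed.
Lemma sw34 n F : cube4 n F = cube4 n (fun a b c d => F a b d c).
Proof. rewrite /cube4; apply: eq_bigr => a _; apply: eq_bigr => b _; by rewrite exchange_big. Qed.

Lemma pat (a b r s : nat) :
  ((a < b) && (r < s) && [&& r != a, r != b, s != a & s != b]) =
  [&& a < b, b < r & r < s] + [&& a < r, r < b & b < s] + [&& a < r, r < s & s < b] +
  [&& r < a, a < b & b < s] + [&& r < a, a < s & s < b] + [&& r < s, s < a & a < b] :> nat.
Proof.
case: (ltngtP a b) => h1; case: (ltngtP r s) => h2; rewrite ?andbF ?andbT //=;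
case: (ltngtP a r) => h3; case: (ltngtP a s) => h4; case: (ltngtP b r) => h5;
case: (ltngtP b s) => h6 //=; lia.
Qed.

Definition SS (D : drawing) a b r s : nat := (ccw D a b r == ccw D a b s).
Definition cond (a b r s : nat) := [&& r != a, r != b, s != a & s != b].

Lemma six D x y z t : x < y -> y < z -> z < t ->
  SS D x y z t + SS D x z y t + SS D x t y z + SS D y z x t + SS D y t x z + SS D z t x y
  = 3 + (D x z == D y t).
Proof.
move=> h1 h2 h3.
have h4 : x < z by lia. have h5 : x < t by lia. have h6 : y < t by lia.
rewrite /SS (ccw123 D h1 h2) (ccw123 D h1 h6) (ccw132 D h1 h2) (ccw123 D h4 h3)
  (ccw132 D h1 h6) (ccw132 D h4 h3) (ccw312 D h1 h2) (ccw123 D h2 h3)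
  (ccw312 D h1 h6) (ccw132 D h2 h3) (ccw312 D h4 h3) (ccw312 D h2 h3).
by case: (D x z); case: (D x t); case: (D y t).
Qed.

Lemma sum_pred1 lo hi r (F : nat -> nat) :
  \sum_(lo <= s < hi) (r == s) * F s = (lo <= r < hi) * F r.
Proof.
rewrite (eq_bigr (fun s => (s == r) * F r)); last by move=> s _; rewrite eq_sym; case: eqP => [->|].
by rewrite -big_distrl /= sum_eq1.
Qed.

Lemma sq_sum lo hi (x : nat -> bool) :
  (\sum_(lo <= r < hi) x r) * (\sum_(lo <= r < hi) x r).-1 =
  \sum_(lo <= r < hi) \sum_(lo <= s < hi) (r != s) * (x r * x s).
Proof.
have E : (\sum_(lo <= r < hi) x r) * (\sum_(lo <= r < hi) x r) =
   (\sum_(lo <= r < hi) x r) + \sum_(lo <= r < hi) \sum_(lo <= s < hi) (r != s) * (x r * x s).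
  rewrite big_distrl /= -big_split /=; apply: eq_big_nat => r hr.
  rewrite big_distrr /=.
  rewrite (eq_bigr (fun s => (r == s) * (x r * x s) + (r != s) * (x r * x s))); last first.
    by move=> s _; case: (r == s); rewrite /= ?mul1n ?mul0n ?addn0.
  rewrite big_split /= sum_pred1 hr mul1n. by case: (x r).
by rewrite -subn1 mulnBr muln1 E addKn.
Qed.

Lemma edge_pairs D n a b :
  lc D 1 n a b * (lc D 1 n a b).-1 + rc D 1 n a b * (rc D 1 n a b).-1 =
  \sum_(1 <= r < n.+1) \sum_(1 <= s < n.+1) ((r != s) && cond a b r s) * SS D a b r s.
Proof.
rewrite /lc /rc !sq_sum -big_split; apply: eq_bigr => r _; rewrite -big_split; apply: eq_bigr => s _.
rewrite /cond /SS.
case: (r != s); case: (r != a); case: (r != b); case: (s != a); case: (s != b);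
case: (ccw D a b r); case: (ccw D a b s); done.
Qed.

Lemma cube4_scale n k F : cube4 n (fun a b c d => k * F a b c d) = k * cube4 n F.
Proof.
rewrite /cube4 big_distrr; apply: eq_bigr => a _; rewrite big_distrr; apply: eq_bigr => b _;
rewrite big_distrr; apply: eq_bigr => c _; rewrite big_distrr //.
Qed.

Definition Q4 n := cube4 n (fun x y z t => [&& x < y, y < z & z < t]).

Lemma identity D n :
  \sum_(1 <= a < n.+1) \sum_(1 <= b < n.+1)
     (a < b) * (lc D 1 n a b * (lc D 1 n a b).-1 + rc D 1 n a b * (rc D 1 n a b).-1)
  = 2 * (3 * Q4 n + crossings n D).
Proof.
have E1 : \sum_(1 <= a < n.+1) \sum_(1 <= b < n.+1)
     (a < b) * (lc D 1 n a b * (lc D 1 n a b).-1 + rc D 1 n a b * (rc D 1 n a b).-1)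
   = cube4 n (fun a b r s => ((a < b) && (r < s) && cond a b r s) * SS D a b r s)
   + cube4 n (fun a b r s => ((a < b) && (s < r) && cond a b r s) * SS D a b r s).
  rewrite -cube4_add /cube4; apply: eq_bigr => a _; apply: eq_bigr => b _.
  rewrite edge_pairs big_distrr; apply: eq_bigr => r _; rewrite big_distrr; apply: eq_bigr => s _.
  case: (a < b); case: (ltngtP r s) => h; rewrite /= ?mul0n ?muln0 ?add0n ?addn0 ?mul1n ?andbF //.
have E2 : cube4 n (fun a b r s => ((a < b) && (s < r) && cond a b r s) * SS D a b r s)
   = cube4 n (fun a b r s => ((a < b) && (r < s) && cond a b r s) * SS D a b r s).
  rewrite [LHS]sw34; apply: cube4_ext => a b r s.
  rewrite /cond /SS [ccw D a b s == _]eq_sym.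
  by case: (r != a); case: (r != b); case: (s != a); case: (s != b); rewrite /= ?andbF.
have E3 : cube4 n (fun a b r s => ((a < b) && (r < s) && cond a b r s) * SS D a b r s)
  = cube4 n (fun a b r s => [&& a < b, b < r & r < s] * SS D a b r s)
  + cube4 n (fun a b r s => [&& a < r, r < b & b < s] * SS D a b r s)
  + cube4 n (fun a b r s => [&& a < r, r < s & s < b] * SS D a b r s)
  + cube4 n (fun a b r s => [&& r < a, a < b & b < s] * SS D a b r s)
  + cube4 n (fun a b r s => [&& r < a, a < s & s < b] * SS D a b r s)
  + cube4 n (fun a b r s => [&& r < s, s < a & a < b] * SS D a b r s).
  rewrite -!cube4_add; apply: cube4_ext => a b r s.
  by rewrite /cond pat !mulnDl.
have P2 : cube4 n (fun a b r s => [&& a < r, r < b & b < s] * SS D a b r s)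
  = cube4 n (fun x y z t => [&& x < y, y < z & z < t] * SS D x z y t) by rewrite [LHS]sw23.
have P3 : cube4 n (fun a b r s => [&& a < r, r < s & s < b] * SS D a b r s)
  = cube4 n (fun x y z t => [&& x < y, y < z & z < t] * SS D x t y z)
  by rewrite [LHS]sw23 [LHS]sw34.
have P4 : cube4 n (fun a b r s => [&& r < a, a < b & b < s] * SS D a b r s)
  = cube4 n (fun x y z t => [&& x < y, y < z & z < t] * SS D y z x t)
  by rewrite [LHS]sw23 [LHS]sw12.
have P5 : cube4 n (fun a b r s => [&& r < a, a < s & s < b] * SS D a b r s)
  = cube4 n (fun x y z t => [&& x < y, y < z & z < t] * SS D y t x z)
  by rewrite [LHS]sw23 [LHS]sw12 [LHS]sw34.
have P6 : cube4 n (fun a b r s => [&& r < s, s < a & a < b] * SS D a b r s)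
  = cube4 n (fun x y z t => [&& x < y, y < z & z < t] * SS D z t x y)
  by rewrite [LHS]sw23 [LHS]sw12 [LHS]sw34 [LHS]sw23.
rewrite E1 E2 addnn -mul2n E3 P2 P3 P4 P5 P6 -!cube4_add; congr (_ * _).
rewrite /Q4 -cube4_scale /crossings -cube4_add; apply: cube4_ext => x y z t.
rewrite -!mulnDr.
case: (ltnP x y) => h1; case: (ltnP y z) => h2; case: (ltnP z t) => h3; rewrite /= ?muln0 ?mul0n //.
rewrite mul1n six //; by case: (D x z == D y t).
Qed.

Lemma pm1 x : x * x.-1 + x = x * x.
Proof. by case: x => //= x; rewrite [in RHS]mulnSr. Qed.

Lemma poly_id (L d e : nat) : e <= 1 ->
  L * L.-1 + (L + 2*d + e) * (L + 2*d+e).-1 =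
  (L + d) * (L + d).-1 + (L + d + e) * (L + d + e).-1 + 2 * (d * d.-1 + e.+1 * d).
Proof.
move=> he.
have := pm1 L; have := pm1 (L + 2*d + e); have := pm1 (L + d); have := pm1 (L + d + e); have := pm1 d.
move: (L * L.-1) (d * d.-1) ((L + 2*d + e) * (L + 2*d+e).-1) ((L + d) * (L + d).-1) ((L + d + e) * (L + d + e).-1).
move=> a b c f g. lia.
Qed.

Lemma sum_jL L d : \sum_(1 <= j < L + d) (j - L) = 'C(d, 2).
Proof.
elim: d => [|d IH].
  rewrite addn0 (eq_big_nat _ _ (F2 := fun _ => 0)) ?big1 // => j /andP[_ hj]; lia.
case: (posnP (L + d)) => h0.
  have -> : d = 0 by lia. have -> : L = 0 by lia. by rewrite big_geq.
by rewrite addnS big_nat_recr //= IH binS bin1 addKn.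
Qed.

Definition Gm N2 M j := if j < M then 2 else N2.+1 - M.*2.

Lemma edge_id N2 L R : 2 <= N2 -> L + R = N2 ->
  L * L.-1 + R * R.-1 = N2./2 * (N2./2).-1 + (N2 - N2./2) * (N2 - N2./2).-1
    + 2 * \sum_(1 <= j < (N2./2).+1) Gm N2 (N2./2) j * Wt j L R.
Proof.
move=> h2.
wlog: L R / L <= R.
  move=> W; case: (leqP L R) => hLR E; first exact: W.
  rewrite addnC (W R L (ltnW hLR)) ?(addnC R) //.
  congr (_ + 2 * _); apply: eq_bigr => j _; by rewrite /Wt addnC.
move=> hLR E.
set M := N2./2.
have hN : N2 = M.*2 + odd N2 by rewrite addnC odd_double_half.
have he : odd N2 <= 1 by case: (odd N2).
have hM : 1 <= M by rewrite /M; move: hN; lia.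
have hLM : L <= M by move: hN; lia.
rewrite big_nat_recr //=.
rewrite /Gm ltnn (eq_big_nat _ _ (F2 := fun j => 2 * (j - L))); last first.
  move=> j /andP[_ hj]; rewrite hj /Wt; congr (_ * _); lia.
rewrite -big_distrr /= (_ : M = L + (M - L)) ?sum_jL; last lia.
rewrite -(@mul_bin_diag (M - L) 1) bin1.
rewrite /Wt (_ : L + (M - L) - R = 0); last lia.
set d := M - L.
have -> : R = L + 2 * d + odd N2 by move: hN; rewrite /d; lia.
have -> : N2 - (L + d) = L + d + odd N2 by move: hN; rewrite /d; lia.
have -> : N2.+1 - (L + d).*2 = (odd N2).+1 by move: hN; rewrite /d; lia.
rewrite addn0 (_ : L + d - L = d); last lia.
rewrite poly_id //.
Qed.

Lemma binom2 x : 'C(x, 2) * 2 = x * x.-1.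
Proof. by rewrite mulnC -(@mul_bin_diag x 1) bin1. Qed.
Lemma binom3 m : 'C(m.+2, 3) * 6 = m.+2 * m.+1 * m.
Proof. rewrite (_ : 6 = 3`!) // bin_ffact; rewrite /= !ffactnS /= ffactn0; lia. Qed.
Lemma binom4 m : 'C(m.+3, 4) * 24 = m.+3 * m.+2 * m.+1 * m.
Proof. rewrite (_ : 24 = 4`!) // bin_ffact; rewrite /= !ffactnS /= ffactn0; lia. Qed.

Lemma half_e (k : nat) (b : bool) : (b + k.*2)./2 = k.
Proof. exact: half_bit_double. Qed.

Lemma core0 m :
  'C(m.*2.+4, 2) * ((m.+1) * m + (m.+1) * m) + 2 * (6 * 'C(m.+3, 4) + 3 * 'C(m.+3, 3))
  = 2 * (3 * 'C(m.*2.+4, 4) + Z (m.*2.+4)).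
Proof.
rewrite /Z.
have -> : (m.*2.+4)./2 = m.+2 by rewrite (_ : m.*2.+4 = false + (m.+2).*2) ?half_e //=; lia.
have -> : (m.*2.+4 - 1)./2 = m.+1 by rewrite (_ : m.*2.+4 - 1 = true + (m.+1).*2) ?half_e //=; lia.
have -> : (m.*2.+4 - 2)./2 = m.+1 by rewrite (_ : m.*2.+4 - 2 = false + (m.+1).*2) ?half_e //=; lia.
have -> : (m.*2.+4 - 3)./2 = m by rewrite (_ : m.*2.+4 - 3 = true + m.*2) ?half_e //=; lia.
have hd : m.+2 * m.+1 * m.+1 * m = (m.+2 * m.+1 * m.+1 * m) %/ 4 * 4.
  rewrite divnK //.
  have h1 : 2 %| m.+1 * m by rewrite dvdn2 oddM /=; case: (odd m).
  have h2 : 2 %| m.+2 * m.+1 by rewrite dvdn2 oddM /=; case: (odd m).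
  rewrite (_ : m.+2 * m.+1 * m.+1 * m = (m.+2 * m.+1) * (m.+1 * m)); last lia.
  by rewrite (_ : 4 = 2 * 2) // dvdn_mul.
move: hd; set Y := _ %/ 4 => hd.
have b2 := binom2 (m.*2.+4); have b3 := binom3 m.+1; have b4 := binom4 m;
have b4' := binom4 (m.*2.+1).
rewrite /= in b2 b4'.
lia.
Qed.

Lemma core1 m :
  'C((m.*2 + 5), 2) * ((m.+1) * m + (m.+2) * (m.+1)) + 2 * (6 * 'C(m.+3, 4) + 2 * (3 * 'C(m.+3, 3)))
  = 2 * (3 * 'C((m.*2 + 5), 4) + Z ((m.*2 + 5))).
Proof.
rewrite /Z.
have -> : ((m.*2 + 5))./2 = m.+2 by rewrite (_ : (m.*2 + 5) = true + (m.+2).*2) ?half_e //=; lia.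
have -> : ((m.*2 + 5) - 1)./2 = m.+2 by rewrite (_ : (m.*2 + 5) - 1 = false + (m.+2).*2) ?half_e //=; lia.
have -> : ((m.*2 + 5) - 2)./2 = m.+1 by rewrite (_ : (m.*2 + 5) - 2 = true + (m.+1).*2) ?half_e //=; lia.
have -> : ((m.*2 + 5) - 3)./2 = m.+1 by rewrite (_ : (m.*2 + 5) - 3 = false + (m.+1).*2) ?half_e //=; lia.
have hd : m.+2 * m.+2 * m.+1 * m.+1 = (m.+2 * m.+2 * m.+1 * m.+1) %/ 4 * 4.
  rewrite divnK //.
  have h2 : 2 %| m.+2 * m.+1 by rewrite dvdn2 oddM /=; case: (odd m).
  rewrite (_ : m.+2 * m.+2 * m.+1 * m.+1 = (m.+2 * m.+1) * (m.+2 * m.+1)); last lia.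
  by rewrite (_ : 4 = 2 * 2) // dvdn_mul.
move: hd; set Y := _ %/ 4 => hd.
have b2 : 'C(m.*2 + 5, 2) * 2 = (m.*2 + 5) * (m.*2 + 4).
  by rewrite binom2 (_ : (m.*2 + 5).-1 = m.*2 + 4) //; lia.
have b3 := binom3 m.+1; have b4 := binom4 m.
have b4' : 'C(m.*2 + 5, 4) * 24 = (m.*2 + 5) * (m.*2 + 4) * (m.*2 + 3) * (m.*2 + 2).
  rewrite (_ : m.*2 + 5 = (m.*2.+2).+3) ?binom4; lia.
lia.
Qed.

Lemma hock1 M : 1 <= M -> \sum_(1 <= j < M) 'C(j.+2, 3) = 'C(M.+2, 4).
Proof.
elim: M => // M IH hM.
case: (posnP M) => h0; first by rewrite h0 big_geq.
by rewrite big_nat_recr //= IH // [in RHS]binS.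
Qed.

Lemma arith n : 4 <= n ->
  'C(n, 2) * ((n - 2)./2 * ((n - 2)./2).-1 + (n - 2 - (n - 2)./2) * (n - 2 - (n - 2)./2).-1)
  + 2 * \sum_(1 <= j < ((n - 2)./2).+1) Gm (n - 2) ((n - 2)./2) j * (3 * 'C(j.+2, 3))
  = 2 * (3 * 'C(n, 4) + Z n).
Proof.
move=> hn.
set N2 := n - 2; set M := N2./2.
have hN : N2 = M.*2 + odd N2 by rewrite addnC odd_double_half.
have hM : 1 <= M by rewrite /M; move: hN; rewrite /N2; lia.
rewrite big_nat_recr //= /Gm ltnn.
rewrite (eq_big_nat _ _ (F2 := fun j => 6 * 'C(j.+2, 3))); last first.
  by move=> j /andP[_ ->]; rewrite mulnA.
rewrite -big_distrr /= hock1 //.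
have [m hm] : exists m, M = m.+1 by exists M.-1; lia.
have hn' : n = m.*2.+4 + odd N2 by move: hN; rewrite /N2 hm; lia.
move: hN; rewrite hm -/N2.
case: (odd N2) hn' => hn' hN.
- have -> : N2 - m.+1 = m.+2 by lia.
  have -> : N2.+1 - (m.+1).*2 = 2 by lia.
  rewrite hn' /= (_ : m.*2.+4 + 1 = (m.*2 + 5)); last lia.
  rewrite -core1; lia.
- have -> : N2 - m.+1 = m.+1 by lia.
  have -> : N2.+1 - (m.+1).*2 = 1 by lia.
  rewrite hn' addn0 -core0 /=; lia.
Qed.

Lemma hockey m N : \sum_(0 <= u < N) 'C(u, m) = 'C(N, m.+1).
Proof.
elim: N => [|N IH]; first by rewrite big_geq.
by rewrite big_nat_recr //= IH [in RHS]binS.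
Qed.

Lemma sumC m z n : z <= n ->
  \sum_(1 <= t < n.+1) (z < t) * 'C(n - t, m) = 'C(n - z, m.+1).
Proof.
move=> hz.
rewrite (big_cat_nat (n:=z.+1)) /=; [|lia|lia].
rewrite (eq_big_nat _ _ (F1 := fun t => (z < t) * 'C(n - t, m)) (F2 := fun _ => 0)); last first.
  move=> t /andP[_ ht]; rewrite (_ : z < t = false) //; apply/negbTE; rewrite -leqNgt; lia.
rewrite big1 // add0n.
rewrite (eq_big_nat _ _ (F2 := fun t => 'C(n - t, m))); last by move=> t /andP[-> _]; rewrite mul1n.
rewrite big_nat_rev /=.
rewrite -{1}(add0n z.+1) big_addn.
rewrite -hockey subSS; apply: eq_big_nat => i /andP[_ hi]; congr 'C(_, _); lia.
Qed.

Lemma sumC' m n : \sum_(1 <= t < n.+1) 'C(n - t, m) = 'C(n, m.+1).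
Proof.
rewrite -(subn0 n) -(sumC m (leq0n n)) subn0; apply: eq_big_nat => t /andP[ht _].
by rewrite ht mul1n.
Qed.

Lemma edges_count n : \sum_(1 <= a < n.+1) \sum_(1 <= b < n.+1) (a < b) = 'C(n, 2).
Proof.
rewrite -sumC'; apply: eq_big_nat => a /andP[_ ha].
rewrite -sumC; last lia.
by apply: eq_bigr => b _; rewrite bin0 muln1.
Qed.

Lemma Q4_count n : Q4 n = 'C(n, 4).
Proof.
rewrite /Q4 /cube4 -sumC'; apply: eq_big_nat => x /andP[_ hx].
rewrite -sumC; last lia. apply: eq_big_nat => y /andP[_ hy].
rewrite -sumC; last lia. rewrite big_distrr; apply: eq_big_nat => z /andP[_ hz].
rewrite -sumC; last lia. rewrite !big_distrr; apply: eq_bigr => t _.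
rewrite bin0 muln1.
by case: (x < y); case: (y < z); case: (z < t).
Qed.

Lemma term_le lo hi (F : nat -> nat) i : lo <= i < hi -> F i <= \sum_(lo <= a < hi) F a.
Proof.
move=> /andP[h1 h2].
rewrite (big_cat_nat (n:=i)) //=; last exact: ltnW.
rewrite [X in _ + X]big_ltn //. lia.
Qed.

Definition Wsum D n j := \sum_(1 <= a < n.+1) \sum_(1 <= b < n.+1) (a < b) * Wt j (lc D 1 n a b) (rc D 1 n a b).

Lemma Wsum_FR D n j : FR D 1 n j + \sum_(1 <= a < n.+1) \sum_(1 <= b < n.+1)
    ((a < b) && ~~ inR 1 n j a b) * Wt j (lc D 1 n a b) (rc D 1 n a b) = Wsum D n j.
Proof.
rewrite /FR /Wsum -big_split; apply: eq_bigr => a _; rewrite -big_split; apply: eq_bigr => b _ /=.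
by case: (a < b); case: (inR 1 n j a b); rewrite /= ?mul0n ?add0n ?addn0.
Qed.

Definition PMv n := (n - 2)./2 * ((n - 2)./2).-1 + (n - 2 - (n - 2)./2) * (n - 2 - (n - 2)./2).-1.

Lemma main_sum D n : 4 <= n ->
  \sum_(1 <= a < n.+1) \sum_(1 <= b < n.+1)
     (a < b) * (lc D 1 n a b * (lc D 1 n a b).-1 + rc D 1 n a b * (rc D 1 n a b).-1)
  = 'C(n, 2) * PMv n + 2 * \sum_(1 <= j < ((n - 2)./2).+1) Gm (n - 2) ((n - 2)./2) j * Wsum D n j.
Proof.
move=> hn.
have E : forall a b, 1 <= a < n.+1 -> 1 <= b < n.+1 ->
   (a < b) * (lc D 1 n a b * (lc D 1 n a b).-1 + rc D 1 n a b * (rc D 1 n a b).-1)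
   = (a < b) * PMv n + 2 * \sum_(1 <= j < ((n - 2)./2).+1) Gm (n - 2) ((n - 2)./2) j *
        ((a < b) * Wt j (lc D 1 n a b) (rc D 1 n a b)).
  move=> a b ha hb.
  case hab: (a < b); last by rewrite !mul0n add0n big1 // => j _; rewrite muln0.
  rewrite !mul1n (@edge_id (n - 2)); [|lia|].
    congr (_ + 2 * _); apply: eq_bigr => j _; by rewrite mul1n.
  rewrite lc_rc; [lia|by rewrite neq_ltn hab|lia|lia].
rewrite (eq_big_nat _ _ (F2 := fun a => \sum_(1 <= b < n.+1)
   ((a < b) * PMv n + 2 * \sum_(1 <= j < ((n - 2)./2).+1) Gm (n - 2) ((n - 2)./2) j *
        ((a < b) * Wt j (lc D 1 n a b) (rc D 1 n a b))))); last first.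
  move=> a ha; apply: eq_big_nat => b hb; exact: E.
have E1 : 'C(n,2) * PMv n = \sum_(1 <= a < n.+1) \sum_(1 <= b < n.+1) (a < b) * PMv n.
  by rewrite -edges_count big_distrl; apply: eq_bigr => a _; rewrite big_distrl.
have E2 : \sum_(1 <= j < ((n - 2)./2).+1) Gm (n - 2) ((n - 2)./2) j * Wsum D n j =
   \sum_(1 <= a < n.+1) \sum_(1 <= b < n.+1) \sum_(1 <= j < ((n - 2)./2).+1)
      Gm (n - 2) ((n - 2)./2) j * ((a < b) * Wt j (lc D 1 n a b) (rc D 1 n a b)).
  transitivity (\sum_(1 <= j < ((n - 2)./2).+1) \sum_(1 <= a < n.+1) \sum_(1 <= b < n.+1)
      Gm (n - 2) ((n - 2)./2) j * ((a < b) * Wt j (lc D 1 n a b) (rc D 1 n a b))).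
    apply: eq_bigr => j _; rewrite /Wsum big_distrr; apply: eq_bigr => a _; by rewrite big_distrr.
  rewrite exchange_big; apply: eq_bigr => a _; by rewrite exchange_big.
rewrite E1 E2 big_distrr -big_split; apply: eq_bigr => a _; by rewrite big_distrr -big_split.
Qed.

Theorem lemma15 (n : nat) (D : drawing) (k : nat) :
  normalized n D -> crossing_optimal n D -> k + 2 <= n./2 ->
  forall i j : nat, 1 <= i -> i < j -> j <= n ->
    edge_index n D i j <= k ->
    i <= k.+1 \/ n - k <= j.
Proof.
move=> _ Hopt Hk i jj Hi Hij Hj Hidx.
case: (leqP i k.+1) => [H|Hi2]; first by left.
case: (leqP (n - k) jj) => [H|Hj2]; first by right.
exfalso.
have hN : n = (n./2).*2 + odd n by rewrite addnC odd_double_half.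
have hN2 : n - 2 = ((n - 2)./2).*2 + odd (n - 2) by rewrite addnC odd_double_half.
have ho1 : odd n <= 1 by case: (odd n).
have ho2 : odd (n - 2) <= 1 by case: (odd (n - 2)).
have hn : 4 <= n by lia.
have hkM : k.+1 <= (n - 2)./2 by lia.
have Hid := identity D n.
rewrite Q4_count main_sum // /PMv in Hid.
rewrite /crossing_optimal in Hopt; rewrite Hopt in Hid.
have Har := arith hn.
set M := (n - 2)./2 in Hid Har hkM hN2.
set G := Gm (n - 2) M in Hid Har.
have Hlow : \sum_(1 <= j < M.+1) G j * (3 * 'C(j.+2, 3) + (j == k.+1))
            <= \sum_(1 <= j < M.+1) G j * Wsum D n j.
  apply: leq_sum_nat => j /andP[hj1 hj2]; rewrite leq_mul2l; apply/orP; right.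
  rewrite -Wsum_FR; apply: leq_add.
    apply: FR_lower; lia.
  case: eqP => [->|//] /=.
  apply: leq_trans (@term_le 1 n.+1 (fun a => \sum_(1 <= b < n.+1)
      ((a < b) && ~~ inR 1 n k.+1 a b) * Wt k.+1 (lc D 1 n a b) (rc D 1 n a b)) i _); last lia.
  apply: leq_trans (@term_le 1 n.+1 (fun b =>
      ((i < b) && ~~ inR 1 n k.+1 i b) * Wt k.+1 (lc D 1 n i b) (rc D 1 n i b)) jj _); last lia.
  rewrite Hij /inR /=.
  rewrite (_ : i < 1 + k.+1 = false); last by apply/negbTE; lia.
  rewrite (_ : n - k.+1 < jj = false); last by apply/negbTE; lia.
  rewrite /= mul1n /Wt.
  move: Hidx; rewrite /edge_index /left_count /right_count -/(lc D 1 n i jj) -/(rc D 1 n i jj).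
  lia.
have HG : 1 <= G k.+1.
  rewrite /G /Gm; case: (k.+1 < M) => //; lia.
have Hsplit : \sum_(1 <= j < M.+1) G j * (3 * 'C(j.+2, 3) + (j == k.+1))
   = \sum_(1 <= j < M.+1) G j * (3 * 'C(j.+2, 3)) + G k.+1.
  rewrite (eq_bigr (fun j => G j * (3 * 'C(j.+2, 3)) + (j == k.+1) * G k.+1)); last first.
    by move=> j _; rewrite mulnDr; case: eqP => [->|]; rewrite ?mul1n ?mul0n ?muln0 ?muln1.
  rewrite big_split /= -big_distrl /= sum_eq1.
  rewrite (_ : 1 <= k.+1 < M.+1 = true) ?mul1n //; apply/andP; split; lia.
lia.
Qed.
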